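(* Let $V$ be a finite nonempty set and $f:\{0,1\}^V\to\{0,1\}^V$. Suppose that for every integer $k$ with $1\leq k\leq |V|$, there are at most $2^k-1$ points $x\in\{0,1\}^V$ such that the local interaction graph $Gf(x)$ has a cycle of length at most $k$. Then $f$ has a unique fixed point.
   Context: For $x\in\{0,1\}^V$, $j\in V$, $\alpha\in\{0,1\}$, let $x^{j\alpha}$ be the point equal to $x$ except that its $j$-component is $\alpha$. The local interaction graph $Gf(x)$ is the signed digraph with vertex set $V$ having, for $i,j\in V$, a positive arc from $j$ to $i$ if $f_i(x^{j1})-f_i(x^{j0})=1$ and a negative arc from $j$ to $i$ if $f_i(x^{j1})-f_i(x^{j0})=-1$ (and no arc from $j$ to $i$ otherwise); loops are allowed. A cycle is a subgraph whose underlying unsigned digraph is a directed cycle (a loop is a cycle of length 1); its length is its number of arcs. *)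

(* Defs.v *)
From mathcomp Require Import all_boot all_order all_algebra.
Import GRing.Theory.
Local Open Scope ring_scope.
Set Implicit Arguments. Unset Strict Implicit. Unset Printing Implicit Defensive.

Definition point (V : finType) := {ffun V -> bool}.

Definition setc (V : finType) (x : point V) (j : V) (a : bool) : point V :=
  [ffun i => if i == j then a else x i].

Definition ldiff (V : finType) (f : point V -> point V) (x : point V) (j i : V) : int :=
  (f (setc x j true) i : nat)%:Z - (f (setc x j false) i : nat)%:Z.

(* Positive / negative arcs j -> i of the local interaction graph Gf(x). *)
Definition pos_arc (V : finType) (f : point V -> point V) (x : point V) (j i : V) : bool :=
  ldiff f x j i == 1%:Z.
Definition neg_arc (V : finType) (f : point V -> point V) (x : point V) (j i : V) : bool :=
  ldiff f x j i == (-1)%R.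

Definition arc (V : finType) (f : point V -> point V) (x : point V) : rel V :=
  fun j i => pos_arc f x j i || neg_arc f x j i.

(* Gf(x) has a cycle of length l: a directed cycle on l distinct vertices
   v_0 -> v_1 -> ... -> v_{l-1} -> v_0 (l = 1 is a loop). *)
Definition has_cycle_len (V : finType) (f : point V -> point V) (x : point V) (l : nat) : Prop :=
  exists c : seq V, [/\ size c = l, (0 < l)%N, uniq c & cycle (arc f x) c].

Definition has_cycle_le (V : finType) (f : point V -> point V) (x : point V) (k : nat) : Prop :=
  exists l : nat, (l <= k)%N /\ has_cycle_len f x l.

(* Main.v *)
Require Import Defs.
From mathcomp Require Import all_boot zify.
Set Implicit Arguments. Unset Strict Implicit. Unset Printing Implicit Defensive.

Section M.
Variables (V : finType) (f : point V -> point V).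

Definition inC (I : {set V}) (z x : point V) := [forall i, (i \notin I) ==> (x i == z i)].
Definition agr (I : {set V}) (u t : point V) := [forall i, (i \in I) ==> (u i == t i)].
Definition Fx (x : point V) : point V := [ffun i => x i != f x i].
Definition M I z t := #|[set x | inC I z x & agr I (Fx x) t]|.

Lemma inC_split (I : {set V}) z j x b : j \in I ->
  inC I z x && (x j == b) = inC (I :\ j) (setc z j b) x.
Proof.
move=> jI; apply/andP/forallP => [[/forallP H /eqP xj] i | H].
  rewrite !inE ffunE negb_and negbK; case: eqP => [-> |_ /=]; first by rewrite /= xj.
  exact: (H i).
split; last by move: (implyP (H j)); rewrite !inE eqxx ffunE eqxx /= => /(_ isT).
apply/forallP => i; apply/implyP => iI; move: (implyP (H i)).
by rewrite !inE ffunE; case: eqP iI => [-> /negP //|_ iI /=]; apply; rewrite iI.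
Qed.

Lemma split_card (I : {set V}) z j (Q : pred (point V)) : j \in I ->
  #|[set x | inC I z x & Q x]| =
  #|[set x | inC (I :\ j) (setc z j false) x & Q x]| +
  #|[set x | inC (I :\ j) (setc z j true) x & Q x]|.
Proof.
move=> jI; rewrite -(cardID [set x : point V | x j]) addnC; congr (_ + _); apply: eq_card => x;
rewrite !inE -inC_split //; case: (x j); rewrite /= ?andbT ?andbF //; case: inC.
Qed.

Lemma agr_split (I : {set V}) u t j b : j \in I ->
  agr I u (setc t j b) = agr (I :\ j) u t && (u j == b).
Proof.
move=> jI; apply/forallP/andP => [H | [/forallP H /eqP uj] i].
  split; last by move: (implyP (H j)); rewrite jI ffunE eqxx; apply.
  apply/forallP => i; apply/implyP; rewrite !inE => /andP[nij iI].
  by move: (implyP (H i)); rewrite iI ffunE (negbTE nij); apply.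
rewrite ffunE; case: (i =P j) => [-> |/eqP nij]; first by rewrite ?eqxx uj ?eqxx implybT.
by apply/implyP => iI; apply: (implyP (H i)); rewrite !inE nij iI.
Qed.

Lemma agr_setc (I : {set V}) u t j : agr I u (setc t j (t j)) = agr I u t.
Proof. by congr agr; apply/ffunP => i; rewrite ffunE; case: eqP => // ->. Qed.

Lemma M_sum (I : {set V}) z t j : j \in I ->
  M I z t + M I z (setc t j (~~ t j)) =
  M (I :\ j) (setc z j false) t + M (I :\ j) (setc z j true) t.
Proof.
move=> jI; rewrite /M -split_card //.
rewrite -(cardID [set x | Fx x j == t j] [set x | inC I z x & agr (I :\ j) (Fx x) t]).
congr (_ + _); apply: eq_card => x; rewrite !inE.
  by rewrite -(agr_setc I (Fx x) t j) agr_split // andbA.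
by rewrite agr_split //; case: (Fx x j) (t j) (inC I z x) (agr (I :\ j) (Fx x) t) => -[] [] [].
Qed.

Lemma M_set0 z t : M set0 z t = 1.
Proof.
rewrite /M -(cards1 z); apply: eq_card => x; rewrite !inE.
have -> : agr set0 (Fx x) t by apply/forallP => i; rewrite inE.
rewrite andbT; apply/forallP/eqP => [H|->]; last by move=> i; rewrite eqxx implybT.
by apply/ffunP => i; apply/eqP; apply: (implyP (H i)); rewrite inE.
Qed.

Lemma card_cube n (I : {set V}) z : #|I| = n -> #|[set x | inC I z x & predT x]| = 2 ^ n.
Proof.
elim: n I z => [|n IH] I z hI.
  move/eqP: hI; rewrite cards_eq0 => /eqP ->.
  rewrite expn0 -(M_set0 z z) /M; apply: eq_card => x; rewrite !inE /=.
  by have -> : agr set0 (Fx x) z by apply/forallP => i; rewrite inE.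
have [j jI] : exists j, j \in I.
  by apply/set0Pn; rewrite -card_gt0 hI.
have hI' : #|I :\ j| = n by move: hI; rewrite (cardsD1 j) jI add1n => -[].
by rewrite (split_card z predT jI) !IH // expnS mul2n addnn.
Qed.

Lemma M_agr (I : {set V}) z u t : agr I u t -> M I z u = M I z t.
Proof.
move=> /forallP H; rewrite /M; apply: eq_card => x; rewrite !inE; congr (_ && _).
apply/forallP/forallP => H' i; apply/implyP => iI;
by move: (implyP (H i) iI) (implyP (H' i) iI) => /eqP -> /eqP ->.
Qed.

Lemma M_prop (I : {set V}) z t :
  (forall u j, j \in I -> M I z u + M I z (setc u j (~~ u j)) = 2) ->
  M I z t = 1 -> forall u, M I z u = 1.
Proof.
move=> Hs Ht u.
move: {2}#|[set i in I | u i != t i]| (erefl #|[set i in I | u i != t i]|) => n.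
elim: n u => [|n IH] u hn.
  rewrite -Ht; apply: M_agr; apply/forallP => i; apply/implyP => iI.
  move/eqP: hn; rewrite cards_eq0 => /eqP /setP /(_ i); rewrite !inE iI /=.
  by move/negbFE.
have [i] : exists i, i \in [set i in I | u i != t i].
  by apply/set0Pn; rewrite -card_gt0 hn.
rewrite inE => /andP[iI uti].
set u' := setc u i (~~ u i).
have hu' : #|[set k in I | u' k != t k]| = n.
  have -> : [set k in I | u' k != t k] = [set k in I | u k != t k] :\ i.
    apply/setP => k; rewrite !inE ffunE; case: (k =P i) => [-> | _] //=.
    by rewrite iI; move: uti; case: (u i) (t i) => -[].
  by move: hn; rewrite (cardsD1 i) inE iI uti add1n => -[].
have := Hs u' i iI; rewrite IH //.
have -> : setc u' i (~~ u' i) = u.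
  by apply/ffunP => k; rewrite !ffunE; case: (k =P i) => [-> |]; rewrite ?eqxx ?negbK.
by move=> [].
Qed.
End M.
Lemma cycle_of_succ (T : finType) (e : rel T) (A : {set T}) (a : T) :
  a \in A -> (forall j, j \in A -> exists2 i, i \in A & e j i) ->
  exists c : seq T, [/\ 0 < size c, size c <= #|A|, uniq c & cycle e c].
Proof.
move=> aA hs.
pose g j := odflt j [pick i in A | e j i].
have gA j : j \in A -> g j \in A /\ e j (g j).
  move=> jA; rewrite /g; case: pickP => [i /andP[iA eji] | H] //=.
  by have [i iA eji] := hs j jA; move: (H i); rewrite iA eji.
have itA n x : x \in A -> iter n g x \in A.
  by move=> xA; elim: n => //= n IH; case: (gA _ IH).
have conA x y : x \in A -> fconnect g x y -> y \in A.
  by move=> xA /iter_findex <-; apply: itA.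
have := looping_order g a; rewrite /looping => /trajectP[i lti Hi].
set y := iter i g a.
have yA : y \in A by apply: itA.
have cyc : fcycle g (orbit g y).
  apply/(orbitPcycle 0 3); exists (order g a - i).-1.
  rewrite prednK ?subn_gt0 // /y -iterD subnK ?(ltnW lti) //.
exists (orbit g y); split.
- by rewrite size_orbit order_gt0.
- have /card_uniqP <- := orbit_uniq g y; apply: subset_leq_card.
  by apply/subsetP => w; rewrite -fconnect_orbit; apply: conA.
- exact: orbit_uniq.
- apply: (sub_in_cycle (P := mem A) (e := frel g)); last exact: cyc.
  + by move=> u v uA _ /eqP <-; case: (gA _ uA).
  + by apply/allP => w; rewrite -fconnect_orbit; apply: conA.
Qed.

Lemma arc_of (V : finType) (f : point V -> point V) x j i :
  f (setc x j true) i != f (setc x j false) i -> Defs.arc f x j i.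
Proof.
rewrite /Defs.arc /pos_arc /neg_arc /ldiff.
by case: (f (setc x j true) i); case: (f (setc x j false) i).
Qed.

Theorem corollary3 (V : finType) (f : point V -> point V) :
  0 < #|V| ->
  (forall k : nat, 1 <= k <= #|V| ->
     forall s : seq (point V), uniq s ->
       (forall x, x \in s -> has_cycle_le f x k) ->
       size s <= 2 ^ k - 1) ->
  exists! x : point V, f x = x.
Proof.
move=> Vpos H.
pose z0 : point V := [ffun => false].
have [M1|Mn1] := boolP (M f setT z0 z0 == 1).
  have [x hx] := cards1P M1.
  have inS y : (y \in [set x | inC setT z0 x & agr setT (Fx f x) z0]) = (f y == y).
    rewrite inE; have -> : inC setT z0 y by apply/forallP => i; rewrite inE.
    apply/forallP/eqP => [Hy | fy].
      apply/ffunP => i; move: (implyP (Hy i)); rewrite inE ffunE => /(_ isT) /eqP.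
      by rewrite /z0 ffunE; case: (y i); case: (f y i).
    by move=> i; rewrite /Fx !ffunE fy eqxx implybT.
  exists x; split.
    by apply/eqP; rewrite -inS hx set11.
  by move=> y /eqP; rewrite -inS hx inE => /eqP ->.
exfalso.
pose P (I : {set V}) := [exists z, exists t, M f I z t != 1].
have PT : P setT by apply/existsP; exists z0; apply/existsP; exists z0.
case: (arg_minnP (fun I : {set V} => #|I|) PT) => I PI Imin.
have Jmin (J : {set V}) : #|J| < #|I| -> forall z t, M f J z t = 1.
  move=> ltJ z t; apply/eqP; apply: contraTT ltJ => Hn; rewrite -leqNgt; apply: Imin.
  by apply/existsP; exists z; apply/existsP; exists t.
case/existsP: PI => z /existsP [t0 Mt0].
have [j0 j0I] : exists j, j \in I.
  apply/set0Pn; apply: contraNneq Mt0 => ->; by rewrite M_set0.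
have Hs u j : j \in I -> M f I z u + M f I z (setc u j (~~ u j)) = 2.
  move=> jI; rewrite M_sum // !Jmin //; by rewrite (cardsD1 j I) jI.
have out x : inC I z x -> forall j, j \in I ->
    exists2 i, i \in I & f (setc x j true) i != f (setc x j false) i.
  move=> xC j jI.
  have [/existsP [i /andP[iI ne]] | /existsPn Hall] :=
    boolP [exists i, (i \in I) && (f (setc x j true) i != f (setc x j false) i)].
    by exists i.
  exfalso; move/negP: Mt0; apply.
  set x1 := setc x j true; set x0 := setc x j false.
  have feq i : i \in I -> f x1 i = f x0 i.
    by move=> iI; move: (Hall i); rewrite iI /= negbK => /eqP.
  have inC1 b : inC I z (setc x j b).
    apply/forallP => i; apply/implyP => iI; rewrite ffunE.
    case: (i =P j) => [ei|_]; first by move: iI; rewrite ei jI.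
    exact: (implyP (forallP xC i)).
  pose t := Fx f x1.
  have m1 : 0 < M f I z t.
    by apply/card_gt0P; exists x1; rewrite inE inC1; apply/forallP => i; rewrite eqxx implybT.
  have m2 : 0 < M f I z (setc t j (~~ t j)).
    apply/card_gt0P; exists x0; rewrite inE inC1; apply/forallP => i; apply/implyP => iI.
    rewrite /t !ffunE -(feq i iI); case: (i =P j) => [-> | ne].
      by rewrite eqxx; case: (f x1 j).
    by rewrite eqxx.
  have Mt : M f I z t = 1 by move: (Hs t j jI) m1 m2; lia.
  by rewrite (M_prop (Hs) Mt).
have cyc x : inC I z x -> has_cycle_le f x #|I|.
  move=> xC; have [c [c1 c2 c3 c4]] : exists c : seq V,
      [/\ 0 < size c, size c <= #|I|, uniq c & cycle (Defs.arc f x) c].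
    apply: (cycle_of_succ j0I) => j jI.
    by have [i iI ne] := out x xC j jI; exists i => //; apply: arc_of.
  by exists (size c); split => //; exists c; split.
have := H #|I| _ (enum [set x | inC I z x & predT x]) (enum_uniq _).
rewrite -cardE (card_cube f z (erefl _)).
have -> : 1 <= #|I| <= #|V| by rewrite max_card andbT card_gt0; apply/set0Pn; exists j0.
have ge1 : 0 < 2 ^ #|I| by rewrite expn_gt0.
move=> /(_ isT) Hle; suff : 2 ^ #|I| <= 2 ^ #|I| - 1 by lia.
apply: Hle => x; rewrite mem_enum inE andbT; exact: cyc.
Qed.
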